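(* Let $r_{\rm A}>0$. There exists $\theta_0\in\,]0,\pi/2[$ such that for every $\theta_{\rm A}\in\,]\theta_0,\pi/2[$ the function $$T_I^S(\eta)=\int_{-\pi-\theta_{\rm A}}^{\theta_{\rm A}}\frac{r_{\rm A}^{3/2}(1-\eta\sin\theta_{\rm A})^{3/2}}{(1-\eta\sin\theta)^2}\,{\rm d}\theta,\qquad \eta\in\,]-1,1/\sin\theta_{\rm A}[,$$ is not convex.
   Context: Kepler problem normalized as $\ddot q=-q/|q|^3$, center ${\rm O}$ at the origin, polar coordinates $(r,\theta)$. With ${\rm A}=(r_{\rm A}\cos\theta_{\rm A},r_{\rm A}\sin\theta_{\rm A})$ and ${\rm B}=(-r_{\rm A}\cos\theta_{\rm A},r_{\rm A}\sin\theta_{\rm A})$, the simple indirect Keplerian arcs from ${\rm A}$ to ${\rm B}$ are the arcs of the conics $r=r_{\rm A}(1-\eta\sin\theta_{\rm A})/(1-\eta\sin\theta)$ ($\eta$ the signed eccentricity) passing below ${\rm O}$, with $\theta$ going from $\theta_{\rm A}$ down to $-\pi-\theta_{\rm A}$; these exist exactly for $\eta\in\,]-1,1/\sin\theta_{\rm A}[$, and $T_I^S(\eta)$ is their elapsed time (using $C=r^2|\dot\theta|$, $C^2=r_{\rm A}(1-\eta\sin\theta_{\rm A})$). *)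

(* Defs.v *)
From Stdlib Require Import Reals Lra ClassicalEpsilon.
Open Scope R_scope.

Definition TIS_integrand (rA thA eta : R) (th : R) : R :=
  Rpower rA (3/2) * Rpower (1 - eta * sin thA) (3/2) / (1 - eta * sin th) ^ 2.

(* Riemann integral over [a,b] when the function is Riemann integrable
   (default 0 otherwise; never used in the relevant range, where the
   integrand is continuous). *)
Definition RInt_cl (f : R -> R) (a b : R) : R :=
  match excluded_middle_informative (exists pr : Riemann_integrable f a b, True) with
  | left H => RiemannInt (proj1_sig (constructive_indefinite_description _ H))
  | right _ => 0
  end.

Definition T_IS (rA thA eta : R) : R :=
  RInt_cl (TIS_integrand rA thA eta) (- PI - thA) thA.

Definition convex_on_open (f : R -> R) (a b : R) : Prop :=
  forall x y t, a < x < b -> a < y < b -> 0 <= t <= 1 ->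
    f (t * x + (1 - t) * y) <= t * f x + (1 - t) * f y.

(* Main.v *)
Require Import Defs.
From Stdlib Require Import Reals Lra Psatz ClassicalEpsilon.
From Coquelicot Require Import Coquelicot.
Open Scope R_scope.

Lemma RInt_cl_eq f a b : ex_RInt f a b -> RInt_cl f a b = RInt f a b.
Proof.
  intros H. unfold RInt_cl.
  destruct excluded_middle_informative as [H1|H1].
  - 
    rewrite <- RInt_Reals. reflexivity.
  - exfalso. apply H1. exists (ex_RInt_Reals_0 _ _ _ H). exact I.
Qed.

Lemma sin_le_s thA th : 0 < thA < PI/2 -> -PI - thA <= th <= thA -> sin th <= sin thA.
Proof.
  intros H1 H2.
  destruct (Rle_dec (-(PI/2)) th) as [h|h].
  - apply sin_incr_1; lra.
  - replace (sin th) with (sin (-PI - th)).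
    + apply sin_incr_1; lra.
    + replace (-PI - th) with (-(th + PI)) by ring. rewrite sin_neg, neg_sin. ring.
Qed.

Lemma key rA thA eta : 0 < thA < PI/2 -> 1 < eta -> 0 < 1 - eta * sin thA ->
  exists I J,
   T_IS rA thA eta = Rpower rA (3/2) * Rpower (1 - eta*sin thA) (3/2) * I /\ 0 <= I /\
   (eta^2-1)*I = 2*cos thA*eta/(1 - eta*sin thA) - J /\ 0 <= J /\
   forall t, 0<t -> J <= (t*I + (2*thA+PI)/t)/2.
Proof.
  intros Hth Heta Heps.
  set (a := -PI - thA). set (b := thA).
  assert (Hab : a <= b) by (unfold a, b; pose proof PI_RGT_0; lra).
  assert (HD : forall th, a <= th <= b -> 1 - eta * sin thA <= 1 - eta * sin th).
  { intros th Hr. pose proof (sin_le_s thA th Hth Hr). nra. }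
  assert (HDr : forall th, Rmin a b <= th <= Rmax a b -> 0 < 1 - eta * sin th).
  { intros th Hr. rewrite Rmin_left, Rmax_right in Hr by lra. pose proof (HD th Hr). lra. }
  set (h := fun th => / (1 - eta * sin th)^2).
  set (k := fun th => / (1 - eta * sin th)).
  set (g := fun th => cos th / (1 - eta * sin th)).
  set (g' := fun th => (eta - sin th) / (1 - eta * sin th)^2).
  assert (Eh : ex_RInt h a b).
  { apply (ex_RInt_continuous (V:=R_CompleteNormedModule)). intros z Hz. apply (ex_derive_continuous (K:=R_AbsRing) (V:=R_NormedModule)).
    unfold h. auto_derive. specialize (HDr z Hz). intro HH; nra. }
  assert (Ek : ex_RInt k a b).
  { apply (ex_RInt_continuous (V:=R_CompleteNormedModule)). intros z Hz. apply (ex_derive_continuous (K:=R_AbsRing) (V:=R_NormedModule)).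
    unfold k. auto_derive. specialize (HDr z Hz). intro HH; nra. }
  assert (Hg : is_RInt g' a b (minus (g b) (g a))).
  { apply (is_RInt_derive (V:=R_CompleteNormedModule)).
    - intros z Hz. specialize (HDr z Hz). unfold g, g'. auto_derive.
      + intro HH; nra.
      + assert (Hc := sin2_cos2 z). unfold Rsqr in Hc.
        assert (HD0 : 1 + - (eta * sin z) <> 0) by lra.
        field_simplify; [ | lra | lra]. f_equal. nra.
    - intros z Hz. apply (ex_derive_continuous (K:=R_AbsRing) (V:=R_NormedModule)). specialize (HDr z Hz).
      unfold g'. auto_derive. intro HH; nra. }
  assert (Hsa : sin a = sin thA).
  { unfold a. replace (-PI - thA) with (-(thA + PI)) by ring. rewrite sin_neg, neg_sin. ring. }
  assert (Hca : cos a = - cos thA).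
  { unfold a. replace (-PI - thA) with (-(thA + PI)) by ring. rewrite cos_neg, neg_cos. ring. }
  assert (Hgv : minus (g b) (g a) = 2 * cos thA / (1 - eta*sin thA)).
  { unfold minus, plus, opp. simpl. unfold g. rewrite Hsa, Hca. unfold b. field. lra. }
  rewrite Hgv in Hg.
  set (I := RInt h a b). set (J := RInt k a b).
  exists I, J. split; [|split; [|split; [|split]]].
  - unfold T_IS. fold a b.
    set (K := Rpower rA (3/2) * Rpower (1 - eta*sin thA) (3/2)).
    change (TIS_integrand rA thA eta) with (fun x => scal K (h x)).
    rewrite RInt_cl_eq.
    + apply is_RInt_unique. apply (is_RInt_scal (V:=R_CompleteNormedModule)). apply RInt_correct. exact Eh.
    + apply (ex_RInt_scal (V:=R_CompleteNormedModule)). exact Eh.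
  - apply RInt_ge_0; auto. intros x Hx. unfold h. apply Rlt_le, Rinv_0_lt_compat.
    apply pow_lt. apply HDr. rewrite Rmin_left, Rmax_right; lra.
  - assert (H1 : is_RInt (fun x => minus (scal eta (g' x)) (k x)) a b
        (minus (scal eta (2 * cos thA / (1 - eta*sin thA))) J)).
    { apply (is_RInt_minus (V:=R_CompleteNormedModule)).
      - apply (is_RInt_scal (V:=R_CompleteNormedModule)). exact Hg.
      - apply RInt_correct. exact Ek. }
    assert (H2 : is_RInt (fun x => scal (eta^2-1) (h x)) a b (scal (eta^2-1) I)).
    { apply (is_RInt_scal (V:=R_CompleteNormedModule)). apply RInt_correct. exact Eh. }
    apply (is_RInt_ext (V:=R_CompleteNormedModule)) with (g := fun x => scal (eta^2-1) (h x)) in H1.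
    + apply (is_RInt_unique (V:=R_CompleteNormedModule)) in H1. apply (is_RInt_unique (V:=R_CompleteNormedModule)) in H2. rewrite H1 in H2.
      revert H2. unfold minus, plus, opp, scal. simpl. unfold mult. simpl. intros H2.
      rewrite <- H2. unfold b, Rdiv. ring.
    + intros x Hx. rewrite Rmin_left, Rmax_right in Hx by lra.
      assert (Hx' : 0 < 1 - eta * sin x) by (apply HDr; rewrite Rmin_left, Rmax_right; lra).
      unfold minus, plus, opp, scal. simpl. unfold mult. simpl. unfold g', k, h. field. lra.
  - apply RInt_ge_0; auto. intros x Hx. unfold k. apply Rlt_le, Rinv_0_lt_compat.
    apply HDr. rewrite Rmin_left, Rmax_right; lra.
  - intros t Ht.
    assert (H3 : is_RInt (fun x => scal (/2) (plus (scal t (h x)) (/t))) a b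
                   (scal (/2) (plus (scal t I) (scal (b-a) (/t))))).
    { apply (is_RInt_scal (V:=R_CompleteNormedModule)).
      apply (is_RInt_plus (V:=R_CompleteNormedModule)).
      - apply (is_RInt_scal (V:=R_CompleteNormedModule)). apply RInt_correct. exact Eh.
      - apply (is_RInt_const (V:=R_CompleteNormedModule)). }
    assert (H4 : J <= RInt (fun x => scal (/2) (plus (scal t (h x)) (/t))) a b).
    { apply RInt_le; auto.
      - exists (scal (/2) (plus (scal t I) (scal (b-a) (/t)))). exact H3.
      - intros x Hx.
        assert (Hx' : 0 < 1 - eta * sin x) by (apply HDr; rewrite Rmin_left, Rmax_right; lra).
        unfold plus, scal. simpl. unfold mult. simpl. unfold k, h.
        set (u := 1 - eta * sin x) in *.
        assert (E : / 2 * (t * / u ^ 2 + / t) - / u = (t - u)^2 / (2 * t * u^2)) by (field; lra).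
        assert (0 <= (t - u)^2 / (2 * t * u^2)).
        { apply Rmult_le_pos. apply pow2_ge_0. apply Rlt_le, Rinv_0_lt_compat. apply Rmult_lt_0_compat; [lra| apply pow_lt; lra]. }
        lra. }
    apply (is_RInt_unique (V:=R_CompleteNormedModule)) in H3. rewrite H3 in H4.
    revert H4. unfold plus, scal. simpl. unfold mult. simpl. unfold a, b. intros H4.
    replace (thA - (- PI - thA)) with (2 * thA + PI) in H4 by ring. lra.
Qed.
Lemma up_pt K q c eta A I J T : 0 < K -> 0 < q -> T = K*q^3*I ->
  A*I = 2*c*eta/q^2 - J -> 0 <= J -> A*T <= 2*c*K*q*eta.
Proof.
  intros HK Hq HT HA HJ. rewrite HT.
  replace (A*(K*q^3*I)) with (K*q^3*(A*I)) by ring. rewrite HA.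
  assert (0 <= K*q^3*J) by (apply Rmult_le_pos; [apply Rmult_le_pos; [lra| apply pow_le; lra]|lra]).
  replace (K * q ^ 3 * (2 * c * eta / q ^ 2 - J)) with (2*c*K*q*eta - K*q^3*J) by (field; lra).
  lra.
Qed.

Lemma low_pt K q c eta A I J T L : 0 < K -> 0 < q -> T = K*q^3*I ->
  A*I = 2*c*eta/q^2 - J -> J <= (q*I + L/q)/2 ->
  K*q*(2*c*eta - L*q/2) <= (A + q/2)*T.
Proof.
  intros HK Hq HT HA HJ. rewrite HT.
  replace ((A + q/2)*(K*q^3*I)) with (K*q^3*(A*I + q*I/2)) by field. rewrite HA.
  assert (HKq : 0 < K*q^3) by (apply Rmult_lt_0_compat; [lra| apply pow_lt; lra]).
  replace (K*q*(2*c*eta - L*q/2)) with (K*q^3*(2*c*eta/q^2 - L/(2*q))) by (field; lra).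
  apply Rmult_le_compat_l; [lra|].
  assert (L/(2*q) = (L/q)/2) by (field; lra). lra.
Qed.

Lemma final K c s e L ex ey ez Ax Ay Az Tx Ty Tz :
  0 < K -> 0 < c -> 0 < s -> s^2 + c^2 = 1 -> 0 < L <= 8 -> e = c^2/100 ->
  ex * s = 1 - (2*e)^2 -> ey * s = 1 - e^2 -> ez * s = 1 - (e/10)^2 ->
  Ax = ex^2 - 1 -> Ay = ey^2 - 1 -> Az = ez^2 - 1 ->
  0 <= Ty -> 0 <= Tz ->
  Ax*Tx <= 2*c*K*(2*e)*ex ->
  Az*Tz <= 2*c*K*(e/10)*ez ->
  K*e*(2*c*ey - L*e/2) <= (Ay + e/2)*Ty ->
  Ty <= 99/399 * Tx + (1 - 99/399) * Tz -> False.
Proof.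
  intros HK Hc Hs Hsc HL He Hx Hy Hz HAx HAy HAz HTy HTz Ux Uz Ly Cv.
  assert (Hc1 : c <= 1) by nra.
  assert (He0 : 0 < e) by (rewrite He; nra).
  assert (Hec : e <= c/100) by (rewrite He; nra).
  assert (Hs2 : 0 < s^2) by nra.
  assert (SAx : s^2*Ax = c^2 - 2*(2*e)^2 + (2*e)^4).
  { rewrite HAx. replace (s^2*(ex^2-1)) with ((ex*s)^2 - s^2) by ring. rewrite Hx. nra. }
  assert (SAy : s^2*Ay = c^2 - 2*e^2 + e^4).
  { rewrite HAy. replace (s^2*(ey^2-1)) with ((ey*s)^2 - s^2) by ring. rewrite Hy. nra. }
  assert (SAz : s^2*Az = c^2 - 2*(e/10)^2 + (e/10)^4).
  { rewrite HAz. replace (s^2*(ez^2-1)) with ((ez*s)^2 - s^2) by ring. rewrite Hz. nra. }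
  assert (HAx0 : 0 < Ax).
  { assert (0 < s^2*Ax) by (rewrite SAx; nra). nra. }
  assert (HAxz : Ax <= Az).
  { assert (s^2*Ax <= s^2*Az).
    { rewrite SAx, SAz. assert (e^2 <= 1/10000) by nra. assert (0 <= e^2) by nra.
      assert (e^4 = e^2*e^2) by ring. nra. }
    nra. }
  assert (HAyx : Ay + e/2 <= 101/100 * Ax).
  { assert (s^2*(Ay + e/2) <= s^2*(101/100*Ax)).
    { replace (s^2*(Ay+e/2)) with (s^2*Ay + s^2*e/2) by field.
      replace (s^2*(101/100*Ax)) with (101/100*(s^2*Ax)) by ring.
      rewrite SAy, SAx. assert (s^2 <= 1) by nra. nra. }
    nra. }
  assert (HcKe : 0 < c*K*e) by (apply Rmult_lt_0_compat; [apply Rmult_lt_0_compat|]; lra).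
  assert (He2 : 0 <= e^2) by nra.
  assert (B1 : s*(Ax*Tx) <= 4*c*K*e).
  { assert (s*(Ax*Tx) <= s*(2*c*K*(2*e)*ex)) by (apply Rmult_le_compat_l; lra).
    replace (s*(2*c*K*(2*e)*ex)) with (4*c*K*e*(ex*s)) in H by field. rewrite Hx in H.
    assert (0 <= 4*(c*K*e)*(4*e^2)) by (apply Rmult_le_pos; nra). nra. }
  assert (B2 : s*(Ax*Tz) <= c*K*e/5).
  { assert (Ax*Tz <= Az*Tz) by nra.
    assert (s*(Az*Tz) <= s*(2*c*K*(e/10)*ez)) by (apply Rmult_le_compat_l; lra).
    replace (s*(2*c*K*(e/10)*ez)) with (c*K*e/5*(ez*s)) in H0 by field. rewrite Hz in H0.
    assert (0 <= (c*K*e)*(e^2)) by (apply Rmult_le_pos; nra). nra. }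
  assert (B3 : s*(Ax*Ty) <= 115/100*c*K*e).
  { assert (s*Ax*Ty <= s*Ax*(99/399 * Tx + (1 - 99/399) * Tz)).
    { apply Rmult_le_compat_l; [nra|lra]. }
    nra. }
  assert (B4 : s*((Ay + e/2)*Ty) <= 101/100*(s*(Ax*Ty))).
  { assert ((Ay + e/2)*Ty <= 101/100*Ax*Ty) by nra. nra. }
  assert (B5 : 195/100*c*K*e <= s*((Ay + e/2)*Ty)).
  { assert (s*(K*e*(2*c*ey - L*e/2)) <= s*((Ay + e/2)*Ty)) by (apply Rmult_le_compat_l; lra).
    replace (s*(K*e*(2*c*ey - L*e/2))) with (K*e*(2*c*(ey*s) - s*L*e/2)) in H by field.
    rewrite Hy in H.
    assert (195/100*c <= 2*c*(1-e^2) - s*L*e/2).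
    { assert (s <= 1) by nra. assert (e <= 1/100) by lra.
      assert (HsL : s*L <= 8) by (apply Rle_trans with (1*L); [apply Rmult_le_compat_r|]; lra).
      assert (s*L*e <= 8*e) by (apply Rmult_le_compat_r; lra).
      assert (e^2 <= 1/10000) by nra.
      assert (c*e^2 <= c*(1/10000)) by (apply Rmult_le_compat_l; lra). nra. }
    assert (0 < K*e) by nra. nra. }
  assert (0 < c*K*e) by (apply Rmult_lt_0_compat; nra).
  nra.
Qed.

Lemma pt_ok s c q : 0 < s -> 0 < c -> s^2 + c^2 = 1 -> 0 < q -> q <= c/50 ->
  1 < (1-q^2)/s /\ 1 - (1-q^2)/s * s = q^2 /\ -1 < (1-q^2)/s < 1/s.
Proof.
  intros Hs Hc Hsc Hq Hqc.
  assert (Hs1 : s < 1) by nra.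
  assert (Hc1 : c <= 1) by nra.
  assert (H1 : q^2 < 1 - s).
  { assert (c^2 <= 2*(1-s)) by nra. assert (q^2 <= c^2/2500) by nra. nra. }
  assert (Hq1 : q^2 < 1) by lra.
  split; [|split].
  - apply (Rmult_lt_reg_r s); [lra|]. unfold Rdiv. rewrite Rmult_assoc, Rinv_l by lra. lra.
  - field. lra.
  - split.
    + apply Rlt_trans with 0; [lra|]. unfold Rdiv. apply Rmult_lt_0_compat; [lra|].
      apply Rinv_0_lt_compat; lra.
    + unfold Rdiv. apply Rmult_lt_compat_r; [apply Rinv_0_lt_compat; lra|]. nra.
Qed.

Lemma rp q : 0 < q -> Rpower (q^2) (3/2) = q^3.
Proof.
  intros Hq. rewrite <- (Rpower_pow 2 q Hq). rewrite Rpower_mult.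
  replace (INR 2 * (3/2)) with (INR 3) by (simpl; field).
  apply Rpower_pow. exact Hq.
Qed.

Lemma pt_facts rA thA q (Hth : 0 < thA < PI/2) (Hq : 0 < q) (Hqc : q <= cos thA / 50) :
  let eta := (1 - q^2)/sin thA in
  exists I J, T_IS rA thA eta = Rpower rA (3/2) * q^3 * I /\ 0 <= I /\
    (eta^2-1)*I = 2*cos thA*eta/q^2 - J /\ 0 <= J /\
    J <= (q*I + (2*thA+PI)/q)/2.
Proof.
  intros eta.
  assert (Hs : 0 < sin thA) by (apply sin_gt_0; lra).
  assert (Hc : 0 < cos thA) by (apply cos_gt_0; lra).
  assert (Hsc : sin thA ^2 + cos thA ^2 = 1) by (pose proof (sin2_cos2 thA); unfold Rsqr in *; lra).
  destruct (pt_ok (sin thA) (cos thA) q Hs Hc Hsc Hq Hqc) as [H1 [H2 H3]].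
  fold eta in H1, H2, H3.
  destruct (key rA thA eta Hth H1 ltac:(rewrite H2; apply pow_lt; exact Hq)) as [I [J [E1 [E2 [E3 [E4 E5]]]]]].
  exists I, J. rewrite H2 in E1, E3. rewrite rp in E1 by exact Hq.
  repeat split; auto.
Qed.

Theorem proposition8 (rA : R) (hrA : 0 < rA) :
  exists th0 : R, 0 < th0 < PI / 2 /\
    forall thA : R, th0 < thA < PI / 2 ->
      ~ convex_on_open (fun eta => T_IS rA thA eta) (-1) (1 / sin thA).
Proof.
  exists (PI/4). split; [pose proof PI_RGT_0; lra|].
  intros thA Hth0 Hconv.
  assert (Hth : 0 < thA < PI/2) by (pose proof PI_RGT_0; lra).
  assert (Hs : 0 < sin thA) by (apply sin_gt_0; lra).
  assert (Hc : 0 < cos thA) by (apply cos_gt_0; lra).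
  assert (Hsc : sin thA ^2 + cos thA ^2 = 1) by (pose proof (sin2_cos2 thA); unfold Rsqr in *; lra).
  assert (Hc1 : cos thA <= 1) by nra.
  set (s := sin thA) in *. set (c := cos thA) in *.
  set (e := c^2/100).
  assert (He0 : 0 < e) by (unfold e; nra).
  assert (Hec : e <= c/100) by (unfold e; nra).
  set (K := Rpower rA (3/2)).
  assert (HK : 0 < K) by (unfold K, Rpower; apply exp_pos).
  destruct (pt_facts rA thA (2*e) Hth ltac:(lra) ltac:(fold c; lra)) as [Ix [Jx [Tx1 [Ix0 [Ax1 [Jx0 Jx1]]]]]].
  destruct (pt_facts rA thA e Hth ltac:(lra) ltac:(fold c; lra)) as [Iy [Jy [Ty1 [Iy0 [Ay1 [Jy0 Jy1]]]]]].
  destruct (pt_facts rA thA (e/10) Hth ltac:(lra) ltac:(fold c; lra)) as [Iz [Jz [Tz1 [Iz0 [Az1 [Jz0 Jz1]]]]]].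
  fold s c K in Tx1, Ty1, Tz1, Ax1, Ay1, Az1.
  set (ex := (1 - (2*e)^2)/s) in *.
  set (ey := (1 - e^2)/s) in *.
  set (ez := (1 - (e/10)^2)/s) in *.
  assert (Px := pt_ok s c (2*e) Hs Hc Hsc ltac:(lra) ltac:(lra)). fold ex in Px.
  assert (Pz := pt_ok s c (e/10) Hs Hc Hsc ltac:(lra) ltac:(lra)). fold ez in Pz.
  assert (Cv := Hconv ex ez (99/399) ltac:(tauto) ltac:(tauto) ltac:(lra)).
  simpl in Cv.
  replace (99/399 * ex + (1 - 99/399) * ez) with ey in Cv
    by (unfold ex, ey, ez; field; lra).
  apply (final K c s e (2*thA+PI) ex ey ez (ex^2-1) (ey^2-1) (ez^2-1)
           (T_IS rA thA ex) (T_IS rA thA ey) (T_IS rA thA ez)); auto.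
  - split; [pose proof PI_RGT_0; lra | pose proof PI_4; lra].
  - unfold ex. field. lra.
  - unfold ey. field. lra.
  - unfold ez. field. lra.
  - rewrite Ty1. apply Rmult_le_pos; [|lra]. apply Rmult_le_pos; [lra| apply pow_le; lra].
  - rewrite Tz1. apply Rmult_le_pos; [|lra]. apply Rmult_le_pos; [lra| apply pow_le; lra].
  - apply (up_pt K (2*e) c ex (ex^2-1) Ix Jx); auto; lra.
  - apply (up_pt K (e/10) c ez (ez^2-1) Iz Jz); auto; lra.
  - apply (low_pt K e c ey (ey^2-1) Iy Jy); auto.
Qed.
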